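(* Let $d\ge2$, $N\ge1$, let the inverse temperature $\beta>0$ be finite, and let $i\neq j$ be levels of the system with $E_i<E_j$. Let $\mathbf p$ be a probability vector on $d$ levels and let $\mathcal P^{(ij)}$ be the memory-assisted protocol defined in the context, using an $N$-dimensional memory with trivial Hamiltonian. Then $$\mathcal P^{(ij)}(\mathbf p\otimes\boldsymbol\eta_M)=\mathbf q\otimes\boldsymbol\eta_M$$ with $$\delta\big(\mathbf q,\Pi^{\beta}_{ij}\mathbf p\big)=\frac{(4\Gamma_i\Gamma_j)^N}{(\Gamma_i-\Gamma_j)^2}\left[\frac{|p_i\Gamma_j-p_j\Gamma_i|}{(N+1)\sqrt{\pi N}}+o\big(N^{-3/2}\big)\right],$$ where $\Gamma_i=\gamma_i/(\gamma_i+\gamma_j)$ and $\Gamma_j=\gamma_j/(\gamma_i+\gamma_j)$.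
   Context: Setting: a $d$-level system with energies $E_1,\dots,E_d$ and thermal distribution $\gamma_a=e^{-\beta E_a}/\sum_b e^{-\beta E_b}$; an $N$-dimensional memory with trivial Hamiltonian and thermal state $\boldsymbol\eta_M=(1/N,\dots,1/N)$. Joint states are probability vectors $\mathbf Q$ of length $dN$, entry $(a-1)N+k$ corresponding to system level $a$ and memory level $k$; joint thermal distribution $\Gamma_{(a-1)N+k}=\gamma_a/N$. Two-level thermalisation $T_{xy}$: $Q_x\mapsto (Q_x+Q_y)\Gamma_x/(\Gamma_x+\Gamma_y)$, $Q_y\mapsto (Q_x+Q_y)\Gamma_y/(\Gamma_x+\Gamma_y)$, other entries unchanged. Round $\mathcal R^{(ij)}_k$ ($k=1,\dots,N$): apply sequentially, for $l=1,\dots,N$, $T_{(j-1)N+k,\,(i-1)N+l}$. $\widetilde{\mathcal P}^{(ij)}=\mathcal R^{(ij)}_N\circ\cdots\circ\mathcal R^{(ij)}_1$. Memory thermalisation $\mathcal T(\mathbf Q)=\mathbf q\otimes\boldsymbol\eta_M$, $q_a=\sum_kQ_{(a-1)N+k}$. $\mathcal P^{(ij)}=\mathcal T\circ\widetilde{\mathcal P}^{(ij)}$. $\beta$-swap $\Pi^\beta_{ij}$ (for $E_i\le E_j$): the stochastic matrix acting as $p_i\mapsto(1-e^{-\beta(E_j-E_i)})p_i+p_j$, $p_j\mapsto e^{-\beta(E_j-E_i)}p_i$, and identity on all other levels. Total variation distance: $\delta(\mathbf p,\mathbf q)=\frac12\sum_a|p_a-q_a|$. *)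

(* Defs.v *)
(* Vectors are functions nat -> R; only the
   first (length) entries are meaningful. All indices are 0-based:
   system level a in {0..d-1}, memory level k in {0..N-1},
   joint index a*N + k (paper: (a-1)N+k with 1-based a,k). *)
From Stdlib Require Import Reals Lra Lia Arith.
Open Scope R_scope.

Definition vec := nat -> R.

Fixpoint sumR (n : nat) (f : nat -> R) : R :=
  match n with
  | O => 0
  | S m => sumR m f + f m
  end.

Definition gibbs (beta : R) (E : nat -> R) (d : nat) (a : nat) : R :=
  exp (- beta * E a) / sumR d (fun b => exp (- beta * E b)).

(* tensor product q (x) eta_M with eta_M uniform on N levels *)
Definition tensorU (N : nat) (q : vec) : vec :=
  fun x => q (x / N)%nat / INR N.

Definition jointGamma (beta : R) (E : nat -> R) (d N : nat) : vec :=
  tensorU N (gibbs beta E d).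

Definition T2 (G : vec) (x y : nat) (Q : vec) : vec :=
  fun z =>
    if Nat.eqb z x then (Q x + Q y) * G x / (G x + G y)
    else if Nat.eqb z y then (Q x + Q y) * G y / (G x + G y)
    else Q z.

Fixpoint round_steps (G : vec) (N i j k n : nat) (Q : vec) : vec :=
  match n with
  | O => Q
  | S m => T2 G (j * N + k) (i * N + m) (round_steps G N i j k m Q)
  end.

Definition round (G : vec) (N i j k : nat) (Q : vec) : vec :=
  round_steps G N i j k N Q.

Fixpoint rounds (G : vec) (N i j m : nat) (Q : vec) : vec :=
  match m with
  | O => Q
  | S m' => round G N i j m' (rounds G N i j m' Q)
  end.

Definition Ptilde (beta : R) (E : nat -> R) (d N i j : nat) (Q : vec) : vec :=
  rounds (jointGamma beta E d N) N i j N Q.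

Definition marginal (N : nat) (Q : vec) : vec :=
  fun a => sumR N (fun k => Q (a * N + k)%nat).

Definition memTherm (N : nat) (Q : vec) : vec := tensorU N (marginal N Q).

Definition Pprot (beta : R) (E : nat -> R) (d N i j : nat) (Q : vec) : vec :=
  memTherm N (Ptilde beta E d N i j Q).

Definition betaswap (beta : R) (E : nat -> R) (i j : nat) (p : vec) : vec :=
  fun a =>
    if Nat.eqb a i then (1 - exp (- beta * (E j - E i))) * p i + p j
    else if Nat.eqb a j then exp (- beta * (E j - E i)) * p i
    else p a.

Definition tvd (d : nat) (p q : vec) : R :=
  / 2 * sumR d (fun a => Rabs (p a - q a)).

Definition little_o_N32 (r : nat -> R) : Prop :=
  forall eps, 0 < eps -> exists N0 : nat, forall N : nat, (N0 <= N)%nat ->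
    Rabs (r N) <= eps / (INR N * sqrt (INR N)).

(* Main.v *)
Require Import Defs.
From Stdlib Require Import Reals Lra Lia Arith.
From Coquelicot Require Import Coquelicot.
Open Scope R_scope.
Ltac fs := repeat split; try rewrite INR_1; try rewrite INR_0; try lra.

Lemma sumR_ext n f g : (forall k, (k < n)%nat -> f k = g k) -> sumR n f = sumR n g.
Proof. induction n; simpl; intros H; auto. rewrite IHn by (intros; apply H; lia). rewrite H by lia; auto. Qed.

Lemma sumR_plus n f g : sumR n (fun k => f k + g k) = sumR n f + sumR n g.
Proof. induction n; simpl; [lra|rewrite IHn; lra]. Qed.

Lemma sumR_scal n c f : sumR n (fun k => c * f k) = c * sumR n f.
Proof. induction n; simpl; [lra|rewrite IHn; lra]. Qed.

Lemma sumR_const n c : sumR n (fun _ => c) = INR n * c.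
Proof. induction n; simpl sumR; [simpl; lra|rewrite IHn, S_INR; lra]. Qed.

Lemma sumR_one n l f g : (l < n)%nat -> (forall k, (k < n)%nat -> k <> l -> f k = g k) ->
  sumR n f = sumR n g + (f l - g l).
Proof.
  induction n; intros Hl H; [lia|]. simpl.
  destruct (Nat.eq_dec l n) as [->|Hn].
  - rewrite (sumR_ext n f g) by (intros; apply H; lia). lra.
  - rewrite IHn by (try lia; intros; apply H; lia). rewrite (H n) by lia. lra.
Qed.

Lemma sumR_zero n f : (forall k, (k < n)%nat -> f k = 0) -> sumR n f = 0.
Proof. intros H; rewrite (sumR_ext n f (fun _ => 0)) by auto. rewrite sumR_const; lra. Qed.

Lemma sumR_two n i j f : (i < n)%nat -> (j < n)%nat -> i <> j ->
  (forall k, (k < n)%nat -> k <> i -> k <> j -> f k = 0) -> sumR n f = f i + f j.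
Proof.
  intros Hi Hj Hij H.
  rewrite (sumR_one n i f (fun k => if Nat.eq_dec k i then 0 else f k)) by
    (auto; intros; destruct Nat.eq_dec; congruence).
  rewrite (sumR_one n j _ (fun _ => 0)) by (auto; intros k Hk Hkj; destruct Nat.eq_dec; auto).
  rewrite sumR_zero by auto.
  destruct (Nat.eq_dec j i); [congruence|]. destruct (Nat.eq_dec i i); [|congruence]. lra.
Qed.

Lemma sumR_shift n f : sumR (S n) f = f O + sumR n (fun k => f (S k)).
Proof. induction n; simpl in *; [lra|]. rewrite IHn. lra. Qed.

Lemma sumR_rev n f : sumR n (fun k => f (n - k)%nat) = sumR n (fun k => f (S k)).
Proof.
  induction n; [reflexivity|].
  rewrite sumR_shift. simpl sumR at 2. rewrite <- IHn.
  rewrite (sumR_ext n (fun k => f (S n - S k)%nat) (fun k => f (n - k)%nat)) by (intros; f_equal; lia).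
  replace (S n - 0)%nat with (S n) by lia. lra.
Qed.

Lemma sumR_nonneg n f : (forall k, (k < n)%nat -> 0 <= f k) -> 0 <= sumR n f.
Proof. induction n; simpl; intros H; [lra|]. pose proof (H n ltac:(lia)). pose proof (IHn ltac:(intros; apply H; lia)). lra. Qed.

Definition pib (a b : R) (m k : nat) : R :=
  INR (fact (m + k)) / (INR (fact m) * INR (fact k)) * a ^ (S m) * b ^ k.

Definition psi (a b : R) (m n : nat) : R :=
  match m with O => 1 | S m' => sumR n (pib a b m') end.

Lemma fact_pos' n : 0 < INR (fact n).
Proof. apply lt_0_INR, lt_O_fact. Qed.

Lemma pib_0 a b k : pib a b 0 k = a * b ^ k.
Proof. unfold pib. simpl (fact 0). simpl (0 + k)%nat. simpl INR. pose proof (fact_pos' k). field; fs. Qed.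

Lemma pib_k0 a b m : pib a b (S m) 0 = a * pib a b m 0.
Proof. unfold pib. rewrite !Nat.add_0_r. simpl (fact 0). pose proof (fact_pos' m). pose proof (fact_pos' (S m)). simpl pow. field; fs. Qed.

Lemma pib_pascal a b m n : pib a b (S m) (S n) = a * pib a b m (S n) + b * pib a b (S m) n.
Proof.
  unfold pib.
  replace (S m + S n)%nat with (S (S (m + n))) by lia.
  replace (m + S n)%nat with (S (m + n)) by lia.
  replace (S m + n)%nat with (S (m + n)) by lia.
  rewrite !fact_simpl, !mult_INR, !S_INR, !plus_INR.
  pose proof (fact_pos' m). pose proof (fact_pos' n). pose proof (fact_pos' (m+n)).
  pose proof (pos_INR m). pose proof (pos_INR n).
  simpl pow. field; fs.
Qed.

Lemma pib_ratio a b m n : INR (S n) * pib a b m (S n) = b * INR (S m + n) * pib a b m n.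
Proof.
  unfold pib. replace (m + S n)%nat with (S (m + n)) by lia.
  replace (S m + n)%nat with (S (m + n)) by lia.
  rewrite !fact_simpl, !mult_INR, !S_INR, !plus_INR.
  pose proof (fact_pos' m). pose proof (fact_pos' n). pose proof (pos_INR n).
  simpl pow. field; fs.
Qed.

Lemma psi_S0 a b m : psi a b (S m) 0 = 0.
Proof. reflexivity. Qed.

Lemma sumR_S n f : sumR (S n) f = sumR n f + f n.
Proof. reflexivity. Qed.

Lemma psi_rec a b m n : psi a b (S m) (S n) = a * psi a b m (S n) + b * psi a b (S m) n.
Proof.
  destruct m as [|m]; unfold psi.
  - induction n.
    + rewrite sumR_S. simpl sumR. rewrite pib_0. simpl. lra.
    + rewrite !sumR_S in *. rewrite !pib_0 in *. simpl pow in *. lra.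
  - induction n.
    + rewrite sumR_S. simpl sumR. rewrite pib_k0. lra.
    + rewrite !sumR_S in *. rewrite pib_pascal. lra.
Qed.

Lemma G_ident a b m n : a + b = 1 ->
  a * sumR n (fun k => psi a b (S m) (S k)) =
  (a * INR n - b * INR (S m)) * psi a b (S m) n + INR n * pib a b m n.
Proof.
  intros Hab. induction n.
  - simpl. lra.
  - rewrite sumR_S, Rmult_plus_distr_l, IHn. unfold psi. rewrite sumR_S.
    rewrite (pib_ratio a b m n). rewrite !S_INR, plus_INR, S_INR. replace b with (1 - a) by lra. ring.
Qed.

Lemma psi_sym a b m n : a + b = 1 -> (m + n > 0)%nat -> psi b a m n = 1 - psi a b n m.
Proof.
  intros Hab. remember (m + n)%nat as s. revert m n Heqs.
  induction s as [s IH] using lt_wf_ind. intros m n Hs Hpos.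
  destruct m as [|m]; destruct n as [|n].
  - lia.
  - simpl psi at 1. rewrite psi_S0. lra.
  - rewrite psi_S0. simpl psi. lra.
  - rewrite psi_rec, (psi_rec a b).
    destruct m as [|m].
    + simpl psi at 1. rewrite (IH (S n) ltac:(lia) 1%nat n) by lia.
      replace (psi a b (S n) 0) with 0 by reflexivity. 
      nra.
    + rewrite (IH (S m + S n)%nat ltac:(lia) (S m) (S n)) by lia.
      rewrite (IH (S (S m) + n)%nat ltac:(lia) (S (S m)) n) by lia. nra.
Qed.

Lemma div_le_l x y c : 0 < c -> x <= y * c -> x / c <= y.
Proof. intros Hc H. apply Rmult_le_reg_r with c; auto. unfold Rdiv. rewrite Rmult_assoc, Rinv_l, Rmult_1_r; lra. Qed.

Lemma div_le_r x y c : 0 < c -> y * c <= x -> y <= x / c.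
Proof. intros Hc H. apply Rmult_le_reg_r with c; auto. unfold Rdiv. rewrite Rmult_assoc, Rinv_l, Rmult_1_r; lra. Qed.

Lemma Rdiv_le_0_compat' x c : 0 <= x -> 0 < c -> 0 <= x / c.
Proof. intros. unfold Rdiv. apply Rmult_le_pos; auto. left; apply Rinv_0_lt_compat; auto. Qed.

Lemma blk_neq N i j l k : i <> j -> (l < N)%nat -> (k < N)%nat -> (i * N + l <> j * N + k)%nat.
Proof.
  intros Hij Hl Hk H. destruct (Nat.lt_total i j) as [Hlt|[Heq|Hgt]]; [|congruence|].
  - assert (i * N + N <= j * N)%nat by nia. lia.
  - assert (j * N + N <= i * N)%nat by nia. lia.
Qed.

Lemma blk_inj N i l l' : (i * N + l = i * N + l')%nat -> l = l'.
Proof. lia. Qed.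

Definition Vf (w : nat -> nat -> R) (N i j k l : nat) (Q : vec) : R :=
  sumR N (fun l' => w (N - k - (if Nat.ltb l' l then 1 else 0))%nat (N - l')%nat * Q (i*N+l')%nat) +
  sumR N (fun k' => w (N - k')%nat (if Nat.ltb k' k then 0 else if Nat.eqb k' k then N - l else N)%nat
                     * Q (j*N+k')%nat).

Definition Grel (G : vec) (N i j : nat) (a b : R) : Prop :=
  forall k l, (k < N)%nat -> (l < N)%nat ->
    G (j*N+k)%nat / (G (j*N+k)%nat + G (i*N+l)%nat) = b /\
    G (i*N+l)%nat / (G (j*N+k)%nat + G (i*N+l)%nat) = a.

Definition Wrec (w : nat -> nat -> R) (a b : R) : Prop :=
  forall m n, w (S m) (S n) = a * w m (S n) + b * w (S m) n.

Lemma T2_other G x y Q z : z <> x -> z <> y -> T2 G x y Q z = Q z.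
Proof. intros. unfold T2. apply Nat.eqb_neq in H. apply Nat.eqb_neq in H0. rewrite H, H0. auto. Qed.

Lemma T2_x G x y Q b : G x / (G x + G y) = b -> T2 G x y Q x = (Q x + Q y) * b.
Proof. intros H. unfold T2. rewrite Nat.eqb_refl. rewrite <- H. unfold Rdiv. ring. Qed.

Lemma T2_y G x y Q a : x <> y -> G y / (G x + G y) = a -> T2 G x y Q y = (Q x + Q y) * a.
Proof. intros Hxy H. unfold T2. rewrite Nat.eqb_refl. 
  assert (Nat.eqb y x = false) by (apply Nat.eqb_neq; auto). rewrite H0. rewrite <- H. unfold Rdiv. ring. Qed.

Lemma Vstep w a b G N i j k l Q : i <> j -> (k < N)%nat -> (l < N)%nat -> Grel G N i j a b -> Wrec w a b ->
  Vf w N i j k (S l) (T2 G (j*N+k) (i*N+l) Q) = Vf w N i j k l Q.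
Proof.
  intros Hij Hk Hl HG Hw. destruct (HG k l Hk Hl) as [Hb Ha].
  assert (Hxy : (j*N+k <> i*N+l)%nat) by (apply not_eq_sym, blk_neq; auto).
  unfold Vf.
  rewrite (sumR_one N l (fun l' => w (N - k - (if Nat.ltb l' (S l) then 1 else 0))%nat (N - l')%nat * T2 G (j*N+k) (i*N+l) Q (i*N+l')%nat) (fun l' => w (N - k - (if Nat.ltb l' l then 1 else 0))%nat (N - l')%nat * Q (i*N+l')%nat)); auto.
  2:{ intros l' Hl' Hne. rewrite T2_other.
      - f_equal. f_equal. f_equal. destruct (Nat.ltb_spec l' (S l)), (Nat.ltb_spec l' l); auto; lia.
      - apply blk_neq; auto.
      - intro Hc. apply blk_inj in Hc. auto. }
  rewrite (sumR_one N k (fun k' => w (N - k')%nat (if Nat.ltb k' k then 0 else if Nat.eqb k' k then N - S l else N)%nat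
                     * T2 G (j*N+k) (i*N+l) Q (j*N+k')%nat) (fun k' => w (N - k')%nat (if Nat.ltb k' k then 0 else if Nat.eqb k' k then N - l else N)%nat
                     * Q (j*N+k')%nat)); auto.
  2:{ intros k' Hk' Hne. rewrite T2_other.
      - f_equal. f_equal. destruct (Nat.ltb k' k); auto. destruct (Nat.eqb_spec k' k); auto; lia.
      - intro Hc. lia.
      - apply not_eq_sym, blk_neq; auto. }
  rewrite T2_x with (b := b) by auto. rewrite T2_y with (a := a) by auto.
  rewrite (Nat.ltb_irrefl l). assert (Nat.ltb l (S l) = true) by (apply Nat.ltb_lt; lia). rewrite H.
  rewrite (Nat.ltb_irrefl k), Nat.eqb_refl. rewrite Nat.sub_0_r.
  assert (Hrec : w (N - k)%nat (N - l)%nat = a * w (N - k - 1)%nat (N - l)%nat + b * w (N - k)%nat (N - S l)%nat).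
  { replace (N - k)%nat with (S (N - k - 1)) by lia.
    replace (N - l)%nat with (S (N - S l)) by lia.
    rewrite Hw. f_equal. f_equal. f_equal. lia. }
  rewrite Hrec. ring.
Qed.

Lemma Vsteps w a b G N i j k l Q : i <> j -> (k < N)%nat -> (l <= N)%nat -> Grel G N i j a b -> Wrec w a b ->
  Vf w N i j k l (round_steps G N i j k l Q) = Vf w N i j k 0 Q.
Proof.
  intros Hij Hk Hl HG Hw. induction l; [reflexivity|].
  simpl round_steps. rewrite Vstep with (a := a) (b := b) by (auto; lia). apply IHl. lia.
Qed.

Lemma Vround_next w N i j k Q : (k < N)%nat -> Vf w N i j k N Q = Vf w N i j (S k) 0 Q.
Proof.
  intros Hk. unfold Vf. f_equal.
  - apply sumR_ext. intros l' Hl'. f_equal. f_equal.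
    destruct (Nat.ltb_spec l' N); [|lia]. destruct (Nat.ltb_spec l' 0); lia.
  - apply sumR_ext. intros k' Hk'. f_equal. f_equal.
    destruct (Nat.ltb_spec k' k), (Nat.ltb_spec k' (S k)), (Nat.eqb_spec k' k), (Nat.eqb_spec k' (S k)); lia.
Qed.

Lemma Vrounds w a b G N i j m Q : i <> j -> (m <= N)%nat -> Grel G N i j a b -> Wrec w a b ->
  Vf w N i j m 0 (rounds G N i j m Q) = Vf w N i j 0 0 Q.
Proof.
  intros Hij Hm HG Hw. induction m; [reflexivity|].
  simpl rounds. rewrite <- Vround_next by lia. unfold round.
  rewrite Vsteps with (a := a) (b := b) by (auto; lia). apply IHm. lia.
Qed.

Lemma round_steps_other G N i j k n Q z :
  (forall l, (l < n)%nat -> z <> (j*N+k)%nat /\ z <> (i*N+l)%nat) ->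
  round_steps G N i j k n Q z = Q z.
Proof.
  induction n; intros H; [reflexivity|]. simpl.
  destruct (H n ltac:(lia)). rewrite T2_other by auto. apply IHn. intros; apply H; lia.
Qed.

Lemma rounds_other G N i j m Q z :
  (forall k l, (k < m)%nat -> (l < N)%nat -> z <> (j*N+k)%nat /\ z <> (i*N+l)%nat) ->
  rounds G N i j m Q z = Q z.
Proof.
  induction m; intros H; [reflexivity|]. simpl. unfold round.
  rewrite round_steps_other by (intros; apply H; lia). apply IHm. intros; apply H; lia.
Qed.

Definition Fd a b n := psi a b (S n) (S n).
Definition Pd a b n := pib a b n (S n).
Definition Wd a b n := (Pd a b n - (a - b) * (1 - Fd a b n)) / (a * b).
Definition Kd a b n := 2 * Pd a b n / INR (n + 2).

Lemma pib_diag_S a b n : pib a b (S n) (S n) = 2 * a * pib a b n (S n).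
Proof.
  unfold pib. replace (S n + S n)%nat with (S (S (n + n))) by lia.
  replace (n + S n)%nat with (S (n + n)) by lia.
  rewrite !fact_simpl, !mult_INR, !S_INR, !plus_INR.
  pose proof (fact_pos' n). pose proof (fact_pos' (n+n)). pose proof (pos_INR n).
  simpl pow. field. fs.
Qed.

Lemma pib_swap a b n : pib b a n (S n) = pib a b n (S n).
Proof. unfold pib. simpl pow. ring. Qed.

Lemma Pd_S a b n : Pd a b (S n) = Pd a b n * (a * b * 2 * (2 * INR n + 3) / (INR n + 2)).
Proof.
  unfold Pd, pib. replace (S n + S (S n))%nat with (S (S (S (n + n)))) by lia.
  replace (n + S n)%nat with (S (n + n)) by lia.
  rewrite !fact_simpl, !mult_INR, !S_INR, !plus_INR.
  pose proof (fact_pos' n). pose proof (fact_pos' (n+n)). pose proof (pos_INR n).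
  simpl pow. field. fs.
Qed.

Lemma Fd_S a b n : a + b = 1 -> Fd a b (S n) = Fd a b n + (a - b) * Pd a b n.
Proof.
  intros Hab. unfold Fd, Pd.
  change (psi a b (S (S n)) (S (S n))) with (psi a b (S (S n)) (S n) + pib a b (S n) (S n)).
  rewrite pib_diag_S.
  rewrite (psi_sym b a (S (S n)) (S n)) by (lra || lia).
  change (psi b a (S n) (S (S n))) with (psi b a (S n) (S n) + pib b a n (S n)).
  rewrite (psi_sym b a (S n) (S n)) by (lra || lia).
  rewrite (pib_swap a b n).
  replace (2 * a * pib a b n (S n)) with (pib a b n (S n) + (a - b) * pib a b n (S n))
    by (replace b with (1 - a) by lra; ring).
  lra.
Qed.

Lemma Wd_S a b n : a + b = 1 -> 0 < a -> 0 < b -> Wd a b n - Wd a b (S n) = Kd a b n.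
Proof.
  intros Hab Ha Hb. unfold Wd, Kd. rewrite Fd_S, Pd_S by auto.
  rewrite plus_INR. simpl (INR 2).
  pose proof (pos_INR n).
  replace b with (1 - a) by lra. field. lra.
Qed.

Fixpoint cc (n : nat) : R :=
  match n with O => 1 | S m => cc m * (2 * INR m + 1) / (2 * INR m + 2) end.

Lemma cc_pos n : 0 < cc n.
Proof.
  induction n; simpl; [lra|]. pose proof (pos_INR n).
  apply Rmult_lt_0_compat; [apply Rmult_lt_0_compat; lra|]. apply Rinv_0_lt_compat; lra.
Qed.

Lemma Pd_cc a b n : Pd a b n = cc (S n) * (4 * a * b) ^ (S n) / 2.
Proof.
  induction n.
  - unfold Pd, pib. simpl. field.
  - rewrite Pd_S, IHn. change (cc (S (S n))) with (cc (S n) * (2 * INR (S n) + 1) / (2 * INR (S n) + 2)).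
    rewrite S_INR. pose proof (pos_INR n). simpl pow. field. lra.
Qed.

Lemma pib_nonneg a b m k : 0 <= a -> 0 <= b -> 0 <= pib a b m k.
Proof.
  intros Ha Hb. unfold pib. pose proof (fact_pos' (m+k)). pose proof (fact_pos' m). pose proof (fact_pos' k).
  apply Rmult_le_pos; [apply Rmult_le_pos|apply pow_le; auto].
  - apply Rmult_le_pos; [lra|]. left. apply Rinv_0_lt_compat. apply Rmult_lt_0_compat; lra.
  - apply pow_le; auto.
Qed.

Lemma geom_sum (t : nat -> R) q n : 0 <= q < 1 -> (forall k, (k <= n)%nat -> 0 <= t k) ->
  (forall k, (k < n)%nat -> t k <= q * t (S k)) -> sumR (S n) t <= t n / (1 - q).
Proof.
  intros Hq Ht Hr. induction n.
  - simpl. pose proof (Ht 0%nat ltac:(lia)). apply Rle_trans with (t 0%nat). lra.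
    unfold Rdiv. rewrite <- (Rmult_1_r (t 0%nat)) at 1. apply Rmult_le_compat_l; auto.
    rewrite <- Rinv_1. apply Rinv_le_contravar; lra.
  - rewrite sumR_S. eapply Rle_trans.
    { apply Rplus_le_compat_r. apply IHn; intros; [apply Ht; lia | apply Hr; lia]. }
    pose proof (Hr n ltac:(lia)). pose proof (Ht (S n) ltac:(lia)).
    apply Rle_trans with (q * t (S n) / (1 - q) + t (S n)).
    + apply Rplus_le_compat_r. unfold Rdiv. apply Rmult_le_compat_r; auto. left; apply Rinv_0_lt_compat; lra.
    + right. field. lra.
Qed.

Lemma Pd_vs_t a b n : Pd a b n = pib b a n n * (a * (2 * INR n + 1) / (INR n + 1)).
Proof.
  unfold Pd, pib. replace (n + S n)%nat with (S (n + n)) by lia.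
  rewrite !fact_simpl, !mult_INR, !S_INR, !plus_INR.
  pose proof (fact_pos' n). pose proof (fact_pos' (n+n)). pose proof (pos_INR n).
  simpl pow. field. fs.
Qed.

Lemma T_bound a b n : a + b = 1 -> b < a -> 0 < b ->
  0 <= 1 - Fd a b n <= 2 * Pd a b n / (a - b).
Proof.
  intros Hab Hba Hb. unfold Fd. rewrite <- (psi_sym a b (S n) (S n)) by (lra || lia).
  change (psi b a (S n) (S n)) with (sumR (S n) (pib b a n)). split.
  - apply sumR_nonneg. intros; apply pib_nonneg; lra.
  - eapply Rle_trans. apply (geom_sum _ (/ (2 * a))).
    + split. left; apply Rinv_0_lt_compat; lra. rewrite <- Rinv_1. apply Rinv_lt_contravar; lra.
    + intros; apply pib_nonneg; lra.
    + intros k Hk. pose proof (pib_ratio b a n k) as H. rewrite !S_INR, plus_INR, S_INR in H.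
      pose proof (pib_nonneg b a n k ltac:(lra) ltac:(lra)).
      pose proof (pib_nonneg b a n (S k) ltac:(lra) ltac:(lra)).
      assert (Hk' : (INR k + 1) * 2 <= INR n + 1 + INR k).
      { assert (Hk2 : (S k <= n)%nat) by lia. apply le_INR in Hk2. rewrite S_INR in Hk2. lra. }
      pose proof (pos_INR k).
      apply Rmult_le_reg_l with (2 * a * (INR n + 1 + INR k)). nra.
      replace (2 * a * (INR n + 1 + INR k) * (/ (2 * a) * pib b a n (S k))) with ((INR n + 1 + INR k) * pib b a n (S k)) by (field; lra).
      nra.
    + rewrite Pd_vs_t. pose proof (pib_nonneg b a n n ltac:(lra) ltac:(lra)). pose proof (pos_INR n).
      replace (1 - / (2 * a)) with ((a - b) / (2 * a)) by (replace b with (1 - a) by lra; field; lra).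
      apply Rle_trans with (pib b a n n * (2 * a) / (a - b)). right. field. lra.
      unfold Rdiv. apply Rmult_le_compat_r. left; apply Rinv_0_lt_compat; lra.
      assert (1 <= (2 * INR n + 1) / (INR n + 1)).
      { apply Rmult_le_reg_r with (INR n + 1). lra. field_simplify; lra. }
      replace (2 * (pib b a n n * (a * (2 * INR n + 1) * / (INR n + 1)))) with
        (pib b a n n * (2 * a) * ((2 * INR n + 1) / (INR n + 1))) by (field; lra).
      rewrite <- (Rmult_1_r (pib b a n n * (2 * a))) at 1. apply Rmult_le_compat_l; nra.
Qed.

Definition rr a b n := a * b * 2 * (2 * INR n + 3) / (INR n + 3).

Lemma Kd_S a b n : Kd a b (S n) = Kd a b n * rr a b n.
Proof.
  unfold Kd, rr. rewrite Pd_S. rewrite !plus_INR, S_INR. simpl (INR 2).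
  pose proof (pos_INR n). field. lra.
Qed.

Lemma Pd_pos a b n : 0 < a -> 0 < b -> 0 < Pd a b n.
Proof.
  intros. rewrite Pd_cc. pose proof (cc_pos (S n)).
  assert (0 < (4 * a * b) ^ S n) by (apply pow_lt; nra). 
  apply Rmult_lt_0_compat; [|lra]. apply Rmult_lt_0_compat; lra.
Qed.

Lemma Pd_le a b n : 0 < a -> 0 < b -> Pd a b n <= a * b * (4 * a * b) ^ n.
Proof.
  intros Ha Hb. induction n.
  - unfold Pd, pib. simpl. right. field.
  - rewrite Pd_S. simpl pow. pose proof (Pd_pos a b n Ha Hb). pose proof (pos_INR n).
    apply Rle_trans with (Pd a b n * (4 * a * b)).
    + apply Rmult_le_compat_l; [lra|].
      assert (H2 : (2 * INR n + 3) / (INR n + 2) <= 2).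
      { replace ((2 * INR n + 3) / (INR n + 2)) with (2 - / (INR n + 2)) by (field; lra).
        assert (0 < / (INR n + 2)) by (apply Rinv_0_lt_compat; lra). lra. }
      replace (a * b * 2 * (2 * INR n + 3) / (INR n + 2)) with ((2 * a * b) * ((2 * INR n + 3) / (INR n + 2))) by (field; lra).
      assert (0 < a * b) by nra. nra.
    + assert (0 < 4 * a * b) by nra. 
      replace (a * b * (4 * a * b * (4 * a * b) ^ n)) with ((a * b * (4 * a * b) ^ n) * (4 * a * b)) by ring.
      apply Rmult_le_compat_r; lra.
Qed.

Lemma Wd_abs a b n : a + b = 1 -> b < a -> 0 < b ->
  - (4 * a * b) ^ n <= Wd a b n <= (4 * a * b) ^ n.
Proof.
  intros Hab Hba Hb. pose proof (T_bound a b n Hab Hba Hb) as [T1 T2].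
  pose proof (Pd_le a b n ltac:(lra) Hb). pose proof (Pd_pos a b n ltac:(lra) Hb).
  assert (Hab0 : 0 < a * b) by nra.
  unfold Wd. split.
  - apply div_le_r; auto.
    assert ((a - b) * (1 - Fd a b n) <= 2 * Pd a b n).
    { apply Rmult_le_reg_r with (/ (a - b)). apply Rinv_0_lt_compat; lra.
      replace ((a - b) * (1 - Fd a b n) * / (a - b)) with (1 - Fd a b n) by (field; lra). lra. }
    nra.
  - apply div_le_l; auto.
    assert (0 <= (a - b) * (1 - Fd a b n)) by nra. nra.
Qed.

Lemma chain_down (f : nat -> R) n : (forall m, f (S m) <= f m) -> forall m, f (n + m)%nat <= f n.
Proof.
  intros H m. induction m. rewrite Nat.add_0_r; lra.
  replace (n + S m)%nat with (S (n + m)) by lia. eapply Rle_trans; [apply H|auto].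
Qed.

Lemma lim_arg x C r : 0 <= C -> 0 <= r < 1 -> (forall m, - (C * r ^ m) <= x) -> 0 <= x.
Proof.
  intros HC Hr H. destruct (Rle_or_lt 0 x) as [|Hx]; auto.
  destruct (pow_lt_1_zero r ltac:(rewrite Rabs_pos_eq; lra) (- x / (C + 1))) as [m Hm].
  { apply Rdiv_lt_0_compat; lra. }
  specialize (Hm m (Nat.le_refl m)). rewrite Rabs_pos_eq in Hm by (apply pow_le; lra).
  specialize (H m). 
  assert (C * r ^ m < - x).
  { apply Rle_lt_trans with ((C + 1) * r ^ m). pose proof (pow_le r m ltac:(lra)). nra.
    apply Rmult_lt_reg_r with (/ (C + 1)). apply Rinv_0_lt_compat; lra.
    replace ((C + 1) * r ^ m * / (C + 1)) with (r ^ m) by (field; lra). exact Hm. }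
  lra.
Qed.

Lemma rho_lt a b : a + b = 1 -> b < a -> 0 < b -> 0 < 4 * a * b < 1.
Proof. intros. split. nra. replace (4 * a * b) with (1 - (a - b) ^ 2) by (replace a with (1 - b) by lra; ring). nra. Qed.

Lemma rr_alt a b n : rr a b n = 2 * a * b * (2 - 3 / (INR n + 3)).
Proof. unfold rr. pose proof (pos_INR n). field. lra. Qed.

Lemma rr_props a b n : a + b = 1 -> b < a -> 0 < b ->
  0 < rr a b n <= rr a b (S n) /\ rr a b (S n) < 4 * a * b.
Proof.
  intros Hab Hba Hb. pose proof (rho_lt a b Hab Hba Hb). rewrite !rr_alt. rewrite S_INR.
  pose proof (pos_INR n). assert (0 < a * b) by nra.
  assert (3 / (INR n + 1 + 3) <= 3 / (INR n + 3)).
  { unfold Rdiv. apply Rmult_le_compat_l; [lra|]. apply Rinv_le_contravar; lra. }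
  assert (0 < 3 / (INR n + 1 + 3)) by (apply Rdiv_lt_0_compat; lra).
  assert (3 / (INR n + 3) <= 1) by (apply div_le_l; lra).
  repeat split; nra.
Qed.

Lemma Kd_nonneg a b n : 0 < a -> 0 < b -> 0 <= Kd a b n.
Proof. intros. unfold Kd. pose proof (Pd_pos a b n H H0). pose proof (pos_INR n).
  apply Rdiv_le_0_compat'. lra. rewrite plus_INR. simpl (INR 2). lra. Qed.

Lemma Kd_le a b n : 0 < a -> 0 < b -> Kd a b n <= a * b * (4 * a * b) ^ n.
Proof.
  intros. unfold Kd. pose proof (Pd_pos a b n H H0). pose proof (Pd_le a b n H H0).
  rewrite plus_INR. simpl (INR 2). pose proof (pos_INR n).
  apply Rle_trans with (Pd a b n); auto.
  apply Rmult_le_reg_r with (INR n + 2). lra. field_simplify; nra.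
Qed.

Lemma W_upper a b n : a + b = 1 -> b < a -> 0 < b -> Wd a b n <= Kd a b n / (1 - 4 * a * b).
Proof.
  intros Hab Hba Hb. pose proof (rho_lt a b Hab Hba Hb) as Hr.
  set (g := fun m => Kd a b m / (1 - 4 * a * b) - Wd a b m).
  assert (Hg : forall m, g (S m) <= g m).
  { intro m. unfold g. pose proof (Wd_S a b m Hab ltac:(lra) Hb). rewrite Kd_S.
    pose proof (rr_props a b m Hab Hba Hb). pose proof (Kd_nonneg a b m ltac:(lra) Hb).
    assert (Kd a b m * rr a b m <= Kd a b m * (4 * a * b)) by (apply Rmult_le_compat_l; lra).
    apply Rmult_le_reg_r with (1 - 4 * a * b). lra.
    rewrite !Rmult_minus_distr_r. unfold Rdiv. rewrite !Rmult_assoc, !Rinv_l by lra. nra. }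
  assert (0 <= g n).
  { apply (lim_arg _ ((4 * a * b) ^ n) (4 * a * b)). apply pow_le; lra. lra.
    intros m. pose proof (chain_down g n Hg m). unfold g in *.
    pose proof (Wd_abs a b (n + m) Hab Hba Hb). pose proof (Kd_nonneg a b (n+m) ltac:(lra) Hb).
    rewrite pow_add in H0.
    assert (0 <= Kd a b (n + m) / (1 - 4 * a * b)) by (apply Rdiv_le_0_compat'; lra). lra. }
  unfold g in H. lra.
Qed.

Lemma W_lower a b n : a + b = 1 -> b < a -> 0 < b -> Kd a b n / (1 - rr a b n) <= Wd a b n.
Proof.
  intros Hab Hba Hb. pose proof (rho_lt a b Hab Hba Hb) as Hr.
  set (h := fun m => Wd a b m - Kd a b m / (1 - rr a b m)).
  assert (Hh : forall m, h (S m) <= h m).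
  { intro m. unfold h. pose proof (Wd_S a b m Hab ltac:(lra) Hb). rewrite Kd_S.
    pose proof (rr_props a b m Hab Hba Hb). pose proof (Kd_nonneg a b m ltac:(lra) Hb).
    set (K := Kd a b m) in *. set (r0 := rr a b m) in *. set (r1 := rr a b (S m)) in *.
    assert (r0 / (1 - r0) <= r0 / (1 - r1)).
    { unfold Rdiv. apply Rmult_le_compat_l; [lra|]. apply Rinv_le_contravar; lra. }
    assert (K * r0 / (1 - r1) >= K * (r0 / (1 - r0))).
    { unfold Rdiv in *. rewrite Rmult_assoc. apply Rle_ge. apply Rmult_le_compat_l; lra. }
    assert (K / (1 - r0) = K + K * (r0 / (1 - r0))) by (field; lra).
    lra. }
  assert (0 <= h n).
  { apply (lim_arg _ ((4 * a * b) ^ n * (1 + a * b / (1 - 4 * a * b))) (4 * a * b)).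
    { apply Rmult_le_pos. apply pow_le; lra. assert (0 <= a * b / (1 - 4 * a * b)) by (apply Rdiv_le_0_compat'; nra). lra. }
    lra.
    intros m. pose proof (chain_down h n Hh m). unfold h in *.
    pose proof (Wd_abs a b (n + m) Hab Hba Hb). pose proof (Kd_le a b (n+m) ltac:(lra) Hb).
    pose proof (rr_props a b (n + m) Hab Hba Hb).
    pose proof (Kd_nonneg a b (n+m) ltac:(lra) Hb).
    rewrite pow_add in *.
    assert (Kd a b (n + m) / (1 - rr a b (n + m)) <= a * b * ((4 * a * b) ^ n * (4 * a * b) ^ m) / (1 - 4 * a * b)).
    { unfold Rdiv. apply Rmult_le_compat; try lra. left; apply Rinv_0_lt_compat; lra.
      apply Rinv_le_contravar; lra. }
    replace (- ((4 * a * b) ^ n * (1 + a * b / (1 - 4 * a * b)) * (4 * a * b) ^ m)) with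
      (- ((4 * a * b) ^ n * (4 * a * b) ^ m) - a * b * ((4 * a * b) ^ n * (4 * a * b) ^ m) / (1 - 4 * a * b))
      by (field; lra).
    lra. }
  unfold h in H. lra.
Qed.

Definition Iw (n : nat) : R := RInt (fun x => sin x ^ n) 0 (PI / 2).

Lemma sinpow_cont n x : continuous (fun x => sin x ^ n) x.
Proof. apply (@ex_derive_continuous R_AbsRing R_NormedModule). auto_derive. auto. Qed.

Lemma sinpow_ex n : ex_RInt (fun x => sin x ^ n) 0 (PI / 2).
Proof. apply (@ex_RInt_continuous R_CompleteNormedModule). intros. apply sinpow_cont. Qed.

Lemma Iw_rec n : INR (n + 2) * Iw (n + 2) = INR (n + 1) * Iw n.
Proof.
  assert (H : is_RInt (fun x => INR (n + 1) * sin x ^ n - INR (n + 2) * sin x ^ (n + 2)) 0 (PI / 2)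
                (minus ((fun x => cos x * sin x ^ (n + 1)) (PI / 2)) ((fun x => cos x * sin x ^ (n + 1)) 0))).
  { apply (@is_RInt_derive R_CompleteNormedModule (fun x => cos x * sin x ^ (n + 1))).
    - intros x _. auto_derive; auto.
      replace (n + 2)%nat with (S (S n)) by lia. replace (n + 1)%nat with (S n) by lia.
      rewrite !S_INR. simpl Init.Nat.pred. simpl pow.
      pose proof (sin2_cos2 x). unfold Rsqr in H.
      replace (cos x * (1 * cos x * ((INR n + 1) * sin x ^ n))) with ((cos x * cos x) * ((INR n + 1) * sin x ^ n)) by ring.
      replace (cos x * cos x) with (1 - sin x * sin x) by lra. ring.
    - intros x _. apply (@ex_derive_continuous R_AbsRing R_NormedModule). auto_derive. auto. }
  pose proof (@RInt_correct R_CompleteNormedModule _ _ _ (sinpow_ex n)) as H1.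
  pose proof (@RInt_correct R_CompleteNormedModule _ _ _ (sinpow_ex (n + 2))) as H2.
  pose proof (@is_RInt_minus R_NormedModule _ _ _ _ _ _ (@is_RInt_scal R_NormedModule _ _ _ (INR (n+1)) _ H1)
      (@is_RInt_scal R_NormedModule _ _ _ (INR (n+2)) _ H2)) as H3.
  apply (@is_RInt_unique R_CompleteNormedModule) in H.
  apply (@is_RInt_unique R_CompleteNormedModule) in H3.
  unfold minus, plus, opp, scal in H, H3. simpl in H, H3. unfold mult in H3. simpl in H3.
  unfold Rminus in H. rewrite H in H3. rewrite cos_PI2, cos_0, sin_0 in H3.
  unfold Iw. replace (n + 1)%nat with (S n) in H3 at 2 by lia. simpl pow in H3. lra.
Qed.

Lemma Iw_0 : Iw 0 = PI / 2.
Proof.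
  unfold Iw. simpl pow. rewrite (@RInt_const R_CompleteNormedModule). unfold scal. simpl. unfold mult. simpl. lra.
Qed.

Lemma Iw_1 : Iw 1 = 1.
Proof.
  unfold Iw.
  assert (H : is_RInt (fun x => sin x ^ 1) 0 (PI / 2) (minus ((fun x => - cos x) (PI / 2)) ((fun x => - cos x) 0))).
  { apply (@is_RInt_derive R_CompleteNormedModule (fun x => - cos x)).
    - intros x _. auto_derive; auto. simpl. ring.
    - intros x _. apply sinpow_cont. }
  apply (@is_RInt_unique R_CompleteNormedModule) in H. rewrite H.
  unfold minus, plus, opp. simpl. rewrite cos_PI2, cos_0. lra.
Qed.

Lemma Iw_mono n : Iw (S n) <= Iw n.
Proof.
  unfold Iw. apply RInt_le.
  - pose proof PI_RGT_0. lra.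
  - apply sinpow_ex.
  - apply sinpow_ex.
  - intros x Hx. pose proof PI_RGT_0.
    assert (0 <= sin x) by (apply sin_ge_0; lra).
    assert (sin x <= 1) by (pose proof (SIN_bound x); lra).
    simpl. pose proof (pow_le (sin x) n H0).
    rewrite <- (Rmult_1_l (sin x ^ n)) at 2. apply Rmult_le_compat_r; lra.
Qed.

Lemma Iw_even m : Iw (2 * m) = PI / 2 * cc m.
Proof.
  induction m.
  - simpl. rewrite Iw_0. lra.
  - replace (2 * S m)%nat with (2 * m + 2)%nat by lia.
    pose proof (Iw_rec (2 * m)) as H. rewrite IHm in H.
    pose proof (pos_INR m).
    apply Rmult_eq_reg_l with (INR (2 * m + 2)). rewrite H. simpl cc.
    rewrite !plus_INR, mult_INR. simpl (INR 2). simpl (INR 1). field. lra.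
    rewrite !plus_INR, mult_INR. simpl (INR 2). lra.
Qed.

Lemma Iw_odd m : Iw (2 * m + 1) = / ((2 * INR m + 1) * cc m).
Proof.
  induction m.
  - simpl. rewrite Iw_1. field.
  - replace (2 * S m + 1)%nat with (2 * m + 1 + 2)%nat by lia.
    pose proof (Iw_rec (2 * m + 1)) as H. rewrite IHm in H.
    pose proof (pos_INR m). pose proof (cc_pos m).
    apply Rmult_eq_reg_l with (INR (2 * m + 1 + 2)). rewrite H. simpl cc. rewrite S_INR.
    rewrite !plus_INR, mult_INR. simpl (INR 2). simpl (INR 1). field. repeat split; try lra.
    rewrite !plus_INR, mult_INR. simpl (INR 2). simpl (INR 1). lra.
Qed.

Lemma wallis m : 2 * INR (S m) / (2 * INR (S m) + 1) <= PI * INR (S m) * cc (S m) ^ 2 <= 1.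
Proof.
  pose proof (Iw_mono (2 * S m)) as H1. pose proof (Iw_mono (2 * m + 1)) as H2.
  replace (S (2 * S m)) with (2 * S m + 1)%nat in H1 by lia.
  replace (S (2 * m + 1)) with (2 * S m)%nat in H2 by lia.
  rewrite Iw_odd, Iw_even in H1. rewrite Iw_odd, Iw_even in H2.
  pose proof (cc_pos m). pose proof (cc_pos (S m)). pose proof (pos_INR m). pose proof PI_RGT_0.
  assert (Hc : cc (S m) = cc m * (2 * INR m + 1) / (2 * INR m + 2)) by reflexivity.
  rewrite S_INR in *.
  split.
  - apply div_le_l. lra.
    assert (HH : 1 <= PI / 2 * cc (S m) * ((2 * (INR m + 1) + 1) * cc (S m))).
    { apply Rmult_le_reg_r with (/ ((2 * (INR m + 1) + 1) * cc (S m))).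
      apply Rinv_0_lt_compat. apply Rmult_lt_0_compat; lra.
      rewrite Rmult_1_l. rewrite Rmult_assoc, Rinv_r. lra. apply Rgt_not_eq. apply Rmult_lt_0_compat; lra. }
    replace (PI * (INR m + 1) * cc (S m) ^ 2 * (2 * (INR m + 1) + 1)) with
      ((2 * (INR m + 1)) * (PI / 2 * cc (S m) * ((2 * (INR m + 1) + 1) * cc (S m)))) by field.
    rewrite <- (Rmult_1_r (2 * (INR m + 1))) at 1. apply Rmult_le_compat_l; lra.
  - rewrite Hc in H2. 
    assert (HH : PI / 2 * cc (S m) * ((2 * INR m + 1) * cc m) <= 1).
    { apply Rmult_le_reg_r with (/ ((2 * INR m + 1) * cc m)).
      apply Rinv_0_lt_compat. apply Rmult_lt_0_compat; lra.
      rewrite Rmult_1_l. rewrite Rmult_assoc, Rinv_r. rewrite Hc. lra. apply Rgt_not_eq. apply Rmult_lt_0_compat; lra. }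
    rewrite Hc in HH |- *. simpl pow.
    replace (PI * (INR m + 1) * (cc m * (2 * INR m + 1) / (2 * INR m + 2) * (cc m * (2 * INR m + 1) / (2 * INR m + 2) * 1)))
      with (PI / 2 * (cc m * (2 * INR m + 1) / (2 * INR m + 2)) * ((2 * INR m + 1) * cc m)) by (field; lra).
    exact HH.
Qed.

Lemma div_blk c N k : (k < N)%nat -> ((c * N + k) / N)%nat = c.
Proof.
  intros Hk. rewrite Nat.div_add_l by lia. rewrite Nat.div_small by auto. lia.
Qed.

Lemma tensorU_blk N f c k : (k < N)%nat -> tensorU N f (c * N + k)%nat = f c / INR N.
Proof. intros. unfold tensorU. rewrite div_blk; auto. Qed.

Lemma marginal_tensor N f c : (1 <= N)%nat -> marginal N (tensorU N f) c = f c.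
Proof.
  intros HN. unfold marginal.
  rewrite (sumR_ext N _ (fun _ => f c / INR N)) by (intros; apply tensorU_blk; auto).
  rewrite sumR_const. field. apply not_0_INR. lia.
Qed.

Lemma Wrec_psi a b : Wrec (psi a b) a b.
Proof. intros m n. apply psi_rec. Qed.

Lemma Wrec_one a b : a + b = 1 -> Wrec (fun _ _ => 1) a b.
Proof. intros H m n. lra. Qed.

Lemma proto_main n i j (G : vec) (a b : R) (p : vec) :
  let N := S n in
  i <> j -> a + b = 1 -> 0 < b -> b < a -> Grel G N i j a b ->
  let Pt := rounds G N i j N (tensorU N p) in
  marginal N Pt i - ((1 - b / a) * p i + p j) = (p i * b - p j * a) * Wd a b n /\
  marginal N Pt j = p i + p j - marginal N Pt i /\
  (forall c, c <> i -> c <> j -> marginal N Pt c = p c).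
Proof.
  intros N Hij Hab Hb Hba HG Pt.
  assert (HN : INR N <> 0) by (apply not_0_INR; unfold N; lia).
  assert (Q0i : forall l, (l < N)%nat -> tensorU N p (i * N + l)%nat = p i / INR N) by (intros; apply tensorU_blk; auto).
  assert (Q0j : forall l, (l < N)%nat -> tensorU N p (j * N + l)%nat = p j / INR N) by (intros; apply tensorU_blk; auto).
  pose proof (Vrounds (psi a b) a b G N i j N (tensorU N p) Hij (Nat.le_refl N) HG (Wrec_psi a b)) as V1.
  pose proof (Vrounds (fun _ _ => 1) a b G N i j N (tensorU N p) Hij (Nat.le_refl N) HG (Wrec_one a b Hab)) as V2.
  fold Pt in V1, V2. unfold Vf in V1, V2.
  rewrite (sumR_ext N (fun l' => psi a b (N - N - (if Nat.ltb l' 0 then 1 else 0))%nat (N - l')%nat * Pt (i * N + l')%nat)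
     (fun l' => Pt (i * N + l')%nat)) in V1.
  2:{ intros. replace (N - N - (if Nat.ltb k 0 then 1 else 0))%nat with 0%nat by (destruct (Nat.ltb_spec k 0); lia). simpl; ring. }
  rewrite (sumR_ext N (fun k' => psi a b (N - k')%nat (if Nat.ltb k' N then 0 else if Nat.eqb k' N then N - 0 else N)%nat * Pt (j * N + k')%nat)
     (fun _ => 0)) in V1.
  2:{ intros k Hk. assert (Nat.ltb k N = true) by (apply Nat.ltb_lt; auto). rewrite H.
      replace (N - k)%nat with (S (N - k - 1)) by lia. rewrite psi_S0. ring. }
  rewrite (sumR_ext N (fun l' => psi a b (N - 0 - (if Nat.ltb l' 0 then 1 else 0))%nat (N - l')%nat * tensorU N p (i * N + l')%nat)
     (fun l' => p i / INR N * psi a b N (N - l')%nat)) in V1.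
  2:{ intros. rewrite Q0i by auto. replace (N - 0 - (if Nat.ltb k 0 then 1 else 0))%nat with N by (destruct (Nat.ltb_spec k 0); lia). ring. }
  rewrite (sumR_ext N (fun k' => psi a b (N - k')%nat (if Nat.ltb k' 0 then 0 else if Nat.eqb k' 0 then N - 0 else N)%nat * tensorU N p (j * N + k')%nat)
     (fun k' => p j / INR N * psi a b (N - k')%nat N)) in V1.
  2:{ intros. rewrite Q0j by auto. replace (if Nat.ltb k 0 then 0 else if Nat.eqb k 0 then N - 0 else N)%nat with N
        by (destruct (Nat.ltb_spec k 0), (Nat.eqb_spec k 0); lia). ring. }
  rewrite (sumR_zero N (fun _ => 0)) in V1 by (intros; reflexivity). rewrite !sumR_scal in V1.
  rewrite (sumR_rev N (psi a b N)) in V1.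
  rewrite (sumR_rev N (fun m => psi a b m N)) in V1.
  rewrite (sumR_ext N (fun k => psi a b (S k) N) (fun k => 1 - psi b a N (S k))) in V1
    by (intros; apply psi_sym; [lra|lia]).
  rewrite (sumR_ext N (fun l' => 1 * Pt (i * N + l')%nat) (fun l' => Pt (i * N + l')%nat)) in V2 by (intros; ring).
  rewrite (sumR_ext N (fun k' => 1 * Pt (j * N + k')%nat) (fun k' => Pt (j * N + k')%nat)) in V2 by (intros; ring).
  rewrite (sumR_ext N (fun l' => 1 * tensorU N p (i * N + l')%nat) (fun _ => p i / INR N)) in V2 by (intros; rewrite Q0i; auto; ring).
  rewrite (sumR_ext N (fun k' => 1 * tensorU N p (j * N + k')%nat) (fun _ => p j / INR N)) in V2 by (intros; rewrite Q0j; auto; ring).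
  rewrite !sumR_const in V2.
  pose proof (G_ident a b n N Hab) as GA. fold N in GA.
  pose proof (G_ident b a n N ltac:(lra)) as GB. fold N in GB.
  rewrite (psi_sym a b N N) in GB by (lra || (unfold N; lia)).
  rewrite pib_swap in GB.
  assert (Hsub : forall f, sumR N (fun k => 1 - f k) = INR N - sumR N f).
  { intros f. rewrite (sumR_ext N (fun k => 1 - f k) (fun k => 1 + (-1) * f k)) by (intros; ring).
    rewrite sumR_plus, sumR_scal, sumR_const. ring. }
  rewrite Hsub in V1.
  unfold marginal. split; [|split].
  - rewrite Rplus_0_r in V1. rewrite V1. unfold Wd, Fd, Pd. change (S n) with N. change (S n) with N in GB.
    set (A := sumR N (fun k => psi a b N (S k))) in *.
    set (B := sumR N (fun k => psi b a N (S k))) in *.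
    set (F := psi a b N N) in *. set (P := pib a b n N) in *.
    assert (HA : A = INR N * ((a - b) * F + P) / a).
    { apply Rmult_eq_reg_l with a; [|lra]. rewrite GA. field. lra. }
    assert (HB : B = INR N * ((b - a) * (1 - F) + P) / b).
    { apply Rmult_eq_reg_l with b; [|lra]. rewrite GB. field. lra. }
    rewrite HA, HB. field. repeat split; lra.
  - assert (INR N * (p i / INR N) = p i) by (field; auto). assert (INR N * (p j / INR N) = p j) by (field; auto). lra.
  - intros c Hci Hcj. apply (f_equal (fun x => x)). 
    rewrite (sumR_ext N _ (fun _ => p c / INR N)). rewrite sumR_const. field; auto.
    intros k Hk. unfold Pt. rewrite rounds_other. apply tensorU_blk; auto.
    intros k' l Hk' Hl. split; apply blk_neq; auto.
Qed.

Lemma Kd_cc a b n : Kd a b n = cc (S n) * (4 * a * b) ^ (S n) / (INR (S n) + 1).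
Proof.
  unfold Kd. rewrite Pd_cc. rewrite plus_INR, (S_INR n). replace (INR 2) with 2 by (simpl; lra). pose proof (pos_INR n). field. lra.
Qed.

Lemma s_bounds m : let N := S m in let s := cc N * sqrt (PI * INR N) in
  1 - / (2 * INR N) <= s <= 1.
Proof.
  intros N s. pose proof (wallis m) as [W1 W2]. fold N in W1, W2.
  pose proof (cc_pos N). pose proof PI_RGT_0.
  assert (HN : 1 <= INR N) by (apply (le_INR 1); unfold N; lia).
  assert (Hs0 : 0 <= s) by (unfold s; apply Rmult_le_pos; [lra|apply sqrt_pos]).
  assert (Hs2 : s * s = PI * INR N * cc N ^ 2).
  { unfold s. replace (cc N * sqrt (PI * INR N) * (cc N * sqrt (PI * INR N))) with
      (cc N ^ 2 * (sqrt (PI * INR N) * sqrt (PI * INR N))) by ring.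
    rewrite sqrt_sqrt by nra. ring. }
  assert (Hs1 : s <= 1) by nra.
  split; [|auto].
  assert (1 - / (2 * INR N) <= 2 * INR N / (2 * INR N + 1)).
  { apply div_le_r. lra.
    replace ((1 - / (2 * INR N)) * (2 * INR N + 1)) with (2 * INR N + 1 - 1 - / (2 * INR N)) by (field; lra).
    assert (0 < / (2 * INR N)) by (apply Rinv_0_lt_compat; lra). lra. }
  nra.
Qed.

Lemma theta_bounds a b n : a + b = 1 -> 0 < b -> b < a ->
  1 - 3 / (2 * INR (S n) * (1 - 4 * a * b)) <= (1 - 4 * a * b) / (1 - rr a b n) <= 1.
Proof.
  intros Hab Hb Hba. pose proof (rho_lt a b Hab Hba Hb) as Hr.
  pose proof (rr_props a b n Hab Hba Hb) as [[R1 R2] R3].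
  assert (Hrho : rr a b n < 4 * a * b) by lra.
  assert (HN : 1 <= INR (S n)) by (apply (le_INR 1); lia).
  assert (Hd : 4 * a * b - rr a b n <= 3 / (2 * INR (S n))).
  { rewrite rr_alt. rewrite S_INR in *. 
    replace (4 * a * b - 2 * a * b * (2 - 3 / (INR n + 3))) with ((4 * a * b) * (3 / (2 * (INR n + 3)))) by (field; lra).
    apply Rle_trans with (1 * (3 / (2 * (INR n + 3)))).
    apply Rmult_le_compat_r. apply Rdiv_le_0_compat'; lra. lra.
    rewrite Rmult_1_l. unfold Rdiv. apply Rmult_le_compat_l; [lra|]. apply Rinv_le_contravar; lra. }
  split.
  - replace ((1 - 4 * a * b) / (1 - rr a b n)) with (1 - (4 * a * b - rr a b n) / (1 - rr a b n)) by (field; lra).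
    assert ((4 * a * b - rr a b n) / (1 - rr a b n) <= (4 * a * b - rr a b n) / (1 - 4 * a * b)).
    { unfold Rdiv. apply Rmult_le_compat_l; [lra|]. apply Rinv_le_contravar; lra. }
    assert ((4 * a * b - rr a b n) / (1 - 4 * a * b) <= 3 / (2 * INR (S n) * (1 - 4 * a * b))).
    { replace (3 / (2 * INR (S n) * (1 - 4 * a * b))) with ((3 / (2 * INR (S n))) / (1 - 4 * a * b)) by (field; lra).
      unfold Rdiv. apply Rmult_le_compat_r. left; apply Rinv_0_lt_compat; lra. unfold Rdiv in Hd. lra. }
    lra.
  - apply div_le_l; lra.
Qed.

Lemma final_bound a b n c : a + b = 1 -> 0 < b -> b < a ->
  let N := S n in let rho := 4 * a * b in
  Rabs (Rabs c * Wd a b n / (rho ^ N / (a - b) ^ 2) - Rabs c / ((INR N + 1) * sqrt (PI * INR N)))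
  <= Rabs c * (/ 2 + 3 / (2 * (1 - rho))) / (INR N * (INR N * sqrt (INR N))).
Proof.
  intros Hab Hb Hba N rho.
  pose proof (rho_lt a b Hab Hba Hb) as Hr. fold rho in Hr.
  assert (Hab2 : (a - b) ^ 2 = 1 - rho) by (unfold rho; replace a with (1 - b) by lra; ring).
  rewrite Hab2.
  pose proof (W_upper a b n Hab Hba Hb) as WU. pose proof (W_lower a b n Hab Hba Hb) as WL.
  rewrite Kd_cc in WU, WL. fold N rho in WU, WL.
  pose proof (s_bounds n) as SB. fold N in SB. set (s := cc N * sqrt (PI * INR N)) in SB.
  pose proof (theta_bounds a b n Hab Hb Hba) as TB. fold N rho in TB.
  set (th := (1 - rho) / (1 - rr a b n)) in TB.
  assert (HN : 1 <= INR N) by (apply (le_INR 1); unfold N; lia).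
  pose proof PI_RGT_0 as Hpi.
  set (sq := sqrt (PI * INR N)).
  assert (Hsq : sqrt (INR N) <= sq).
  { unfold sq. apply sqrt_le_1_alt. pose proof PI2_1. nra. }
  assert (Hsq0 : 1 <= sqrt (INR N)) by (rewrite <- sqrt_1; apply sqrt_le_1_alt; lra).
  set (D := (INR N + 1) * sq).
  assert (HD : INR N * sqrt (INR N) <= D) by (unfold D; nra).
  assert (HD0 : 0 < D) by (unfold D; nra).
  assert (Hrn : 0 < rho ^ N) by (apply pow_lt; lra).
  set (W := Wd a b n) in *.
  set (YD := W * (1 - rho) / rho ^ N * D).
  assert (Hexpr : Rabs c * W / (rho ^ N / (1 - rho)) - Rabs c / D = Rabs c / D * (YD - 1)).
  { unfold YD. field. repeat split; lra. }
  rewrite Hexpr.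
  assert (Hsdef : cc N * rho ^ N / (INR N + 1) * (1 - rho) / rho ^ N * D = s * (1 - rho)).
  { unfold s, D, sq. field. repeat split; lra. }
  assert (Hk : 0 < (1 - rho) / rho ^ N * D).
  { apply Rmult_lt_0_compat; auto. apply Rdiv_lt_0_compat; lra. }
  assert (HYk : YD = W * ((1 - rho) / rho ^ N * D)) by (unfold YD; field; lra).
  cbv zeta in SB. fold s in SB.
  assert (HYup : YD <= s).
  { rewrite HYk. apply Rle_trans with (cc N * rho ^ N / (INR N + 1) / (1 - rho) * ((1 - rho) / rho ^ N * D)).
    - apply Rmult_le_compat_r; lra.
    - right. unfold s, D, sq. field. repeat split; lra. }
  assert (HYlo : s * th <= YD).
  { rewrite HYk. apply Rle_trans with (cc N * rho ^ N / (INR N + 1) / (1 - rr a b n) * ((1 - rho) / rho ^ N * D)).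
    - right. unfold s, th, D, sq. pose proof (rr_props a b n Hab Hba Hb). fold rho in H. field. repeat split; lra.
    - apply Rmult_le_compat_r; lra. }
  set (y := 3 / (2 * INR N * (1 - rho))) in TB.
  assert (Hy0 : 0 <= y) by (unfold y; apply Rdiv_le_0_compat'; nra).
  assert (Hs0 : 0 <= s) by (unfold s; apply Rmult_le_pos; [left; apply cc_pos|apply sqrt_pos]).
  assert (Hsth : s * th >= s * (1 - y)) by (apply Rle_ge; apply Rmult_le_compat_l; lra).
  assert (HY : Rabs (YD - 1) <= / (2 * INR N) + y).
  { rewrite Rabs_left1 by lra. nra. }
  assert (Hc : / (2 * INR N) + y = (/ 2 + 3 / (2 * (1 - rho))) / INR N) by (unfold y; field; lra).
  rewrite Hc in HY.
  rewrite Rabs_mult. rewrite (Rabs_pos_eq (Rabs c / D)) by (apply Rdiv_le_0_compat'; [apply Rabs_pos|lra]).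
  set (C1 := / 2 + 3 / (2 * (1 - rho))) in *.
  assert (HC1 : 0 <= C1) by (unfold C1; assert (0 < 3 / (2 * (1 - rho))) by (apply Rdiv_lt_0_compat; lra); lra).
  pose proof (Rabs_pos c).
  apply Rle_trans with (Rabs c / D * (C1 / INR N)).
  { apply Rmult_le_compat_l; auto. apply Rdiv_le_0_compat'; lra. }
  replace (Rabs c / D * (C1 / INR N)) with (Rabs c * C1 / (INR N * D)) by (field; lra).
  unfold Rdiv. apply Rmult_le_compat_l. nra.
  apply Rinv_le_contravar. nra. nra.
Qed.

Lemma sumR_pos n f : (0 < n)%nat -> (forall k, (k < n)%nat -> 0 < f k) -> 0 < sumR n f.
Proof.
  intros Hn H. destruct n; [lia|]. simpl.
  pose proof (sumR_nonneg n f ltac:(intros; left; apply H; lia)). pose proof (H n ltac:(lia)). lra.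
Qed.

Theorem theorem2 :
  forall (d : nat) (beta : R) (E : nat -> R) (i j : nat) (p : nat -> R),
    (2 <= d)%nat -> 0 < beta ->
    (i < d)%nat -> (j < d)%nat -> i <> j -> E i < E j ->
    (forall a, (a < d)%nat -> 0 <= p a) -> sumR d p = 1 ->
    let Gi := gibbs beta E d i / (gibbs beta E d i + gibbs beta E d j) in
    let Gj := gibbs beta E d j / (gibbs beta E d i + gibbs beta E d j) in
    let q := fun N : nat => marginal N (Pprot beta E d N i j (tensorU N p)) in
    exists r : nat -> R,
      little_o_N32 r /\
      forall N : nat, (1 <= N)%nat ->
        (forall x : nat, (x < d * N)%nat ->
           Pprot beta E d N i j (tensorU N p) x = tensorU N (q N) x) /\
        tvd d (q N) (betaswap beta E i j p) =
          (4 * Gi * Gj) ^ N / (Gi - Gj) ^ 2 *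
          (Rabs (p i * Gj - p j * Gi) / ((INR N + 1) * sqrt (PI * INR N)) + r N).
Proof.
  intros d beta E i j p Hd Hbeta Hi Hj Hij HE Hp Hsum Gi Gj q.
  set (Z := sumR d (fun b => exp (- beta * E b))).
  assert (HZ : 0 < Z) by (apply sumR_pos; [lia|intros; apply exp_pos]).
  set (gi := gibbs beta E d i). set (gj := gibbs beta E d j).
  assert (Hgi : gi = exp (- beta * E i) / Z) by reflexivity.
  assert (Hgj : gj = exp (- beta * E j) / Z) by reflexivity.
  assert (Hei : exp (- beta * E j) < exp (- beta * E i)) by (apply exp_increasing; nra).
  pose proof (exp_pos (- beta * E j)) as Hej0.
  assert (Hgj0 : 0 < gj) by (rewrite Hgj; apply Rdiv_lt_0_compat; auto).
  assert (Hgji : gj < gi).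
  { rewrite Hgi, Hgj. unfold Rdiv. apply Rmult_lt_compat_r; auto. apply Rinv_0_lt_compat; auto. }
  set (a := Gi). set (b := Gj).
  assert (Ha : a = gi / (gi + gj)) by reflexivity.
  assert (Hb : b = gj / (gi + gj)) by reflexivity.
  assert (Hab : a + b = 1) by (rewrite Ha, Hb; field; lra).
  assert (Hb0 : 0 < b) by (rewrite Hb; apply Rdiv_lt_0_compat; lra).
  assert (Hba : b < a) by (rewrite Ha, Hb; unfold Rdiv; apply Rmult_lt_compat_r; [apply Rinv_0_lt_compat; lra|lra]).
  assert (Hexp : exp (- beta * (E j - E i)) = b / a).
  { rewrite Ha, Hb. replace (gj / (gi + gj) / (gi / (gi + gj))) with (gj / gi) by (field; lra).
    rewrite Hgi, Hgj. replace (- beta * (E j - E i)) with (- beta * E j + - (- beta * E i)) by ring.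
    rewrite exp_plus, exp_Ropp. field. split; apply Rgt_not_eq; auto. apply exp_pos. }
  set (c := p i * b - p j * a).
  set (rho := 4 * a * b).
  assert (Hkey : forall n, let N := S n in
     (forall x, Pprot beta E d N i j (tensorU N p) x = tensorU N (q N) x) /\
     tvd d (q N) (betaswap beta E i j p) = Rabs c * Wd a b n).
  { intros n N.
    assert (HN : INR N <> 0) by (apply not_0_INR; unfold N; lia).
    assert (HG : Grel (jointGamma beta E d N) N i j a b).
    { intros k l Hk Hl. unfold jointGamma. rewrite !tensorU_blk by auto. fold gi gj.
      split; [rewrite Hb|rewrite Ha]; field; split; auto; lra. }
    destruct (proto_main n i j (jointGamma beta E d N) a b p Hij Hab Hb0 Hba HG) as [P1 [P2 P3]].
    fold N in P1, P2, P3.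
    set (Pt := rounds (jointGamma beta E d N) N i j N (tensorU N p)) in *.
    assert (Hq : forall x, q N x = marginal N Pt x).
    { intros x. unfold q, Pprot, memTherm. rewrite marginal_tensor by (unfold N; lia). reflexivity. }
    split.
    - intros x. change (tensorU N (q N) x) with (q N (x / N)%nat / INR N). rewrite Hq. reflexivity.
    - unfold tvd. rewrite (sumR_two d i j) by (auto; intros k Hk Hki Hkj;
        rewrite Hq, P3 by auto; unfold betaswap; rewrite (proj2 (Nat.eqb_neq k i) Hki), (proj2 (Nat.eqb_neq k j) Hkj);
        rewrite Rminus_diag, Rabs_R0; reflexivity).
      rewrite !Hq. unfold betaswap. rewrite Nat.eqb_refl. rewrite (proj2 (Nat.eqb_neq j i) (not_eq_sym Hij)), Nat.eqb_refl.
      rewrite Hexp. rewrite P2.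
      replace (p i + p j - marginal N Pt i - b / a * p i) with (- (marginal N Pt i - ((1 - b / a) * p i + p j))) by ring.
      rewrite Rabs_Ropp, P1. rewrite Rabs_mult.
      pose proof (W_lower a b n Hab Hba Hb0). pose proof (Kd_nonneg a b n ltac:(lra) Hb0).
      pose proof (rr_props a b n Hab Hba Hb0). pose proof (rho_lt a b Hab Hba Hb0).
      assert (0 <= Kd a b n / (1 - rr a b n)) by (apply Rdiv_le_0_compat'; lra).
      rewrite (Rabs_pos_eq (Wd a b n)) by lra. fold c. field. }
  set (pref := fun N : nat => rho ^ N / (a - b) ^ 2).
  assert (Hpref : forall N, pref N <> 0).
  { intros N. unfold pref. pose proof (rho_lt a b Hab Hba Hb0). apply Rgt_not_eq. apply Rdiv_lt_0_compat.
    apply pow_lt; unfold rho; lra. apply pow_lt; lra. }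
  exists (fun N => tvd d (q N) (betaswap beta E i j p) / pref N - Rabs c / ((INR N + 1) * sqrt (PI * INR N))).
  split.
  - intros eps Heps.
    set (C1 := / 2 + 3 / (2 * (1 - rho))).
    destruct (INR_archimed eps (Rabs c * C1) Heps) as [N0 HN0].
    exists (S N0). intros N HN. destruct N as [|n]; [lia|].
    destruct (Hkey n) as [_ Ht]. rewrite Ht.
    pose proof (final_bound a b n c Hab Hb0 Hba) as FB. cbv zeta in FB. fold rho C1 in FB.
    unfold pref. eapply Rle_trans; [exact FB|].
    assert (HN1 : 1 <= INR (S n)) by (apply (le_INR 1); lia).
    assert (HNN : INR N0 < INR (S n)) by (apply lt_INR; lia).
    assert (Hsq : 1 <= sqrt (INR (S n))) by (rewrite <- sqrt_1; apply sqrt_le_1_alt; lra).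
    assert (HD : 0 < INR (S n) * sqrt (INR (S n))) by nra.
    replace (Rabs c * C1 / (INR (S n) * (INR (S n) * sqrt (INR (S n))))) with
      ((Rabs c * C1 / INR (S n)) / (INR (S n) * sqrt (INR (S n)))) by (field; lra).
    unfold Rdiv. apply Rmult_le_compat_r. left; apply Rinv_0_lt_compat; auto.
    apply div_le_l. lra. pose proof (pos_INR N0). nra.
  - intros N HN. destruct N as [|n]; [lia|].
    destruct (Hkey n) as [K1 K2]. split.
    + intros x _. apply K1.
    + fold a b. fold rho. change (rho ^ S n / (a - b) ^ 2) with (pref (S n)). field.
      pose proof PI_RGT_0. assert (1 <= INR (S n)) by (apply (le_INR 1); lia).
      repeat split; [apply Rgt_not_eq, sqrt_lt_R0; nra | lra | apply Hpref].
Qed.
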